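(* Let $\Sigma$ be a finite alphabet, $p\in\Sigma^{++}$ and $\theta=\llbracket\hat p\rrbracket$. Then $p$ is regional (i.e. admits a regional homogeneous partition) if and only if both directed graphs with vertex set $\Sigma$ and edge relations $\mathcal A_\theta\cap\Sigma^2$ and $\mathcal A'_\theta\cap\Sigma^2$, respectively, are acyclic.
   Context: A picture over $\Sigma$ is a nonempty rectangular array of symbols of $\Sigma$, $\Sigma^{++}$ the set of all of them; $p(i,j)$ is the pixel in row $i$, column $j$; for $\#\notin\Sigma$, $\hat p$ is $p$ surrounded by a one-pixel frame of $\#$'s. A tile is a $2\times 2$ picture; $\llbracket q\rrbracket$ is the set of all $2\times2$ subpictures (on consecutive rows and columns) of $q$. A subdomain of $p$ is a rectangle $\{x,\dots,x'\}\times\{y,\dots,y'\}$ of positions; it is $C$-homogeneous (label $C$) if all its pixels equal $C$. A homogeneous partition of $p$ is a partition of its set of positions into homogeneous subdomains; it is regional if distinct subdomains have distinct labels; $p$ is regional if it admits a regional homogeneous partition. Adjacency relations: for a tile $t$ over $\Sigma\cup\{\#\}$ define relations $\mathcal H_t,\mathcal V_t\subseteq(\Sigma\cup\{\#\})^2$ by: for $i=1,2$, $t(i,1)\,\mathcal H_t\,t(i,2)$ iff $t(i,1)\ne t(i,2)$; for $j=1,2$, $t(1,j)\,\mathcal V_t\,t(2,j)$ iff $t(1,j)\neq t(2,j)$ (and these are the only pairs). Let $\mathcal A_t=\mathcal H_t\cup\mathcal V_t$ and $\mathcal A'_t=\mathcal H_t^{-1}\cup\mathcal V_t$. For a set $\theta$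 of tiles, $x\,\mathcal H_\theta\,y$ iff $x\,\mathcal H_t\,y$ for some $t\in\theta$, and similarly for $\mathcal V_\theta,\mathcal A_\theta,\mathcal A'_\theta$. A tile set $\theta$ for which the graphs of $\mathcal A_\theta\cap\Sigma^2$ and $\mathcal A'_\theta\cap\Sigma^2$ are both acyclic is called simple regional. *)

(* Defs.v *)
From mathcomp Require Import all_boot all_order all_algebra.
Set Implicit Arguments. Unset Strict Implicit. Unset Printing Implicit Defensive.

(* A picture over Sigma with m rows and n columns is a matrix 'M[Sigma]_(m,n)
   (entries p i j, rows/columns indexed from 0); nonemptiness = 0 < m, 0 < n.
   The frame symbol # is represented by None : option Sigma. *)

Section Pictures.
Variable Sigma : finType.

(* hat p, indexed by nat: rows 0..m+1, columns 0..n+1; pixel (i,j) of hat p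
   with 1 <= i <= m, 1 <= j <= n is p (i-1) (j-1); all other pixels are #. *)
Definition frame (m n : nat) (p : 'M[Sigma]_(m, n)) (i j : nat) : option Sigma :=
  if (0 < i) && (0 < j) then
    match @insub _ (fun k => k < m) 'I_m i.-1, @insub _ (fun k => k < n) 'I_n j.-1 with
    | Some i', Some j' => Some (p i' j')
    | _, _ => None
    end
  else None.

(* A tile: ((t(1,1), t(1,2)), (t(2,1), t(2,2))) over Sigma ∪ {#}. *)
Definition tile := ((option Sigma * option Sigma) * (option Sigma * option Sigma))%type.

Definition tile_at (m n : nat) (p : 'M[Sigma]_(m, n)) (i : 'I_m.+1) (j : 'I_n.+1) : tile :=
  ((frame p i j, frame p i j.+1), (frame p i.+1 j, frame p i.+1 j.+1)).

Definition in_theta (m n : nat) (p : 'M[Sigma]_(m, n)) (t : tile) : bool :=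
  [exists i : 'I_m.+1, exists j : 'I_n.+1, t == tile_at p i j].

Definition H_tile (t : tile) : rel (option Sigma) := fun a b =>
  [|| [&& a == t.1.1, b == t.1.2 & t.1.1 != t.1.2]
    | [&& a == t.2.1, b == t.2.2 & t.2.1 != t.2.2]].

Definition V_tile (t : tile) : rel (option Sigma) := fun a b =>
  [|| [&& a == t.1.1, b == t.2.1 & t.1.1 != t.2.1]
    | [&& a == t.1.2, b == t.2.2 & t.1.2 != t.2.2]].

Definition A_tile (t : tile) : rel (option Sigma) := fun a b => H_tile t a b || V_tile t a b.
Definition A'_tile (t : tile) : rel (option Sigma) := fun a b => H_tile t b a || V_tile t a b.

(* R_theta restricted to Sigma^2, for theta = [[hat p]] *)
Definition theta_rel (R : tile -> rel (option Sigma)) (m n : nat) (p : 'M[Sigma]_(m, n))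
  : rel Sigma := fun x y => [exists t : tile, in_theta p t && R t (Some x) (Some y)].

Definition A_theta m n (p : 'M[Sigma]_(m, n)) : rel Sigma := theta_rel A_tile p.
Definition A'_theta m n (p : 'M[Sigma]_(m, n)) : rel Sigma := theta_rel A'_tile p.

Definition acyclic (r : rel Sigma) : Prop :=
  forall s : seq Sigma, s != [::] -> ~~ cycle r s.

Definition subdomain (m n : nat) (D : {set 'I_m * 'I_n}) : Prop :=
  exists (x x' : 'I_m) (y y' : 'I_n), x <= x' /\ y <= y' /\
    D = [set ij : 'I_m * 'I_n | (x <= ij.1 <= x') && (y <= ij.2 <= y')].

Definition homogeneous (m n : nat) (p : 'M[Sigma]_(m, n)) (D : {set 'I_m * 'I_n})
  (C : Sigma) : Prop := forall ij, ij \in D -> p ij.1 ij.2 = C.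

Definition homogeneous_partition (m n : nat) (p : 'M[Sigma]_(m, n))
  (P : {set {set 'I_m * 'I_n}}) : Prop :=
  partition P [set: 'I_m * 'I_n] /\
  forall D, D \in P -> subdomain D /\ exists C, homogeneous p D C.

Definition regional_partition (m n : nat) (p : 'M[Sigma]_(m, n))
  (P : {set {set 'I_m * 'I_n}}) : Prop :=
  homogeneous_partition p P /\
  forall D1 D2 C1 C2, D1 \in P -> D2 \in P -> homogeneous p D1 C1 ->
    homogeneous p D2 C2 -> D1 != D2 -> C1 != C2.

Definition regional (m n : nat) (p : 'M[Sigma]_(m, n)) : Prop :=
  exists P, regional_partition p P.

End Pictures.

(* Main.v *)
Require Import Defs.
From mathcomp Require Import all_boot all_order all_algebra.
From Stdlib Require Import Lia.
Set Implicit Arguments. Unset Strict Implicit. Unset Printing Implicit Defensive.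

Ltac tolia := repeat match goal with
  | H : is_true (_ <= _) |- _ => move/leP: H => H
  | H : is_true (_ < _) |- _ => move/ltP: H => H
  end.

Lemma ex_min_seq (T : eqType) (f : T -> nat) (s : seq T) :
  s != [::] -> exists2 x, x \in s & forall y, y \in s -> f x <= f y.
Proof.
elim: s => [//|a s IH] _.
case: (eqVneq s [::]) => [->|/IH [x xs hx]].
  by exists a => [|y]; rewrite ?mem_seq1 ?inE // => /eqP ->.
case: (leqP (f a) (f x)) => h.
  exists a; first by rewrite inE eqxx.
  move=> y; rewrite inE => /orP [/eqP ->//|/hx]; exact: leq_trans.
exists x; first by rewrite inE xs orbT.
move=> y; rewrite inE => /orP [/eqP ->|/hx//]; exact: ltnW.
Qed.

Section NoCycle.
Variables (T : eqType) (S : pred T) (lo1 hi1 lo2 hi2 : T -> nat).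
Hypothesis lohi : forall x, S x -> lo1 x <= hi1 x /\ lo2 x <= hi2 x.
Hypothesis disj : forall x y, S x -> S y -> x != y ->
  [|| hi1 x < lo1 y, hi1 y < lo1 x, hi2 x < lo2 y | hi2 y < lo2 x].

Definition Qr : rel T := fun x y =>
  [&& S x, S y, x != y, lo1 x <= hi1 y & lo2 x <= hi2 y].

Lemma Q2 x y : Qr x y -> Qr y x -> False.
Proof.
case/and5P=> Sx Sy xy h1 h2 /and5P [_ _ _ h3 h4].
move: (disj Sx Sy xy); case/orP => [H|/orP [H|/orP [H|H]]]; tolia; lia.
Qed.

Lemma Q3 x y z : Qr y x -> Qr x z -> hi1 x <= hi1 y -> hi1 x <= hi1 z ->
  y != z -> Qr y z.
Proof.
case/and5P=> Sy Sx yx h1 h2 /and5P [_ Sz _ h3 h4] m1 m2 yz.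
have [l1 l2] := lohi Sx. have [l3 l4] := lohi Sy.
have xy : x != y by rewrite eq_sym.
apply/and5P; split => //.
  exact: leq_trans h1 m2.
rewrite leqNgt; apply/negP => H.
move: (disj Sx Sy xy); case/orP => [H'|/orP [H'|/orP [H'|H']]]; tolia; lia.
Qed.

Lemma Qnocycle_n N s : size s <= N -> s != [::] -> ~~ cycle Qr s.
Proof.
elim: N s => [|N IH] s; first by rewrite leqn0 => /nilP ->.
move=> sz sn; apply/negP => cyc.
have [x xs hx] := ex_min_seq hi1 sn.
case/splitPr: xs sz cyc hx => s1 s2.
rewrite -(rot_cycle (size s1)) rot_size_cat cat_cons => sz cyc hx.
have hx' : forall y, y \in x :: s2 ++ s1 -> hi1 x <= hi1 y.
  move=> y; rewrite -cat_cons mem_cat orbC -mem_cat => /hx //.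
have sz' : size (s2 ++ s1) <= N.
  by move: sz; rewrite !size_cat /= addnS ltnS addnC.
move: (s2 ++ s1) sz' cyc hx' => [|z w] sz' cyc hx'.
  by move: cyc => /=; rewrite /Qr eqxx !andbF.
move: cyc => /= /andP [qxz]; rewrite rcons_path => /andP [pzw qyx].
set y := last z w in qyx.
have yin : y \in z :: w by exact: mem_last.
case: (eqVneq y z) => [eyz|nyz].
  by move: qyx; rewrite eyz => /(Q2 qxz).
have qyz := Q3 qyx qxz (hx' y (@mem_behead _ (x :: z :: w) _ yin)) (hx' z ltac:(by rewrite !inE eqxx orbT)) nyz.
apply: (negP (IH (z :: w) sz' isT)).
by rewrite /= rcons_path pzw.
Qed.

Lemma nocycle (R : rel T) : subrel R Qr -> forall s, s != [::] -> ~~ cycle R s.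
Proof.
move=> sub s sn; apply/negP => /(sub_cycle sub); apply/negP.
exact: (@Qnocycle_n (size s)).
Qed.
End NoCycle.

Ltac nlia :=
  repeat match goal with
  | H : is_true (_ <= _) |- _ => let h := fresh "h" in have h := elimT leP H; clear H
  end;
  try (apply/leP); rewrite <- ?minusE, <- ?plusE, <- ?multE in *; lia.

Section Pix.
Variables (Sigma : finType) (m n : nat) (p : 'M[Sigma]_(m, n)).

Definition pcol (k : 'I_m * 'I_n) := p k.1 k.2.

Lemma frame_some i j x : frame p i j = Some x ->
  exists k : 'I_m * 'I_n, [/\ (k.1 : nat).+1 = i, (k.2 : nat).+1 = j & pcol k = x].
Proof.
rewrite /frame; case: i => [|i]; case: j => [|j] //=.
case: (@insubP _ (fun k => k < m) 'I_m i) => [i' _ ei|_];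
case: (@insubP _ (fun k => k < n) 'I_n j) => [j' _ ej|_] //= [<-].
by exists (i', j'); rewrite /= ei ej.
Qed.

Lemma frame_pix (k : 'I_m * 'I_n) : frame p (k.1).+1 (k.2).+1 = Some (pcol k).
Proof.
rewrite /frame /=.
case: (@insubP _ (fun k => k < m) 'I_m k.1) => [i' _ ei|]; last by rewrite ltn_ord.
case: (@insubP _ (fun k => k < n) 'I_n k.2) => [j' _ ej|]; last by rewrite ltn_ord.
by rewrite /pcol; congr (Some (p _ _)); apply: val_inj.
Qed.

Lemma tile_in (k : 'I_m * 'I_n) :
  in_theta p ((frame p (k.1).+1 (k.2).+1, frame p (k.1).+1 (k.2).+2),
               (frame p (k.1).+2 (k.2).+1, frame p (k.1).+2 (k.2).+2)).
Proof.
apply/existsP; exists (Ordinal (ltn_ord k.1 : (k.1 : nat).+1 < m.+1)).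
apply/existsP; exists (Ordinal (ltn_ord k.2 : (k.2 : nat).+1 < n.+1)).
by [].
Qed.

Lemma A_right (u v : 'I_m * 'I_n) : v.1 = u.1 -> (v.2 : nat) = (u.2).+1 ->
  pcol u != pcol v -> A_theta p (pcol u) (pcol v).
Proof.
move=> e1 e2 ne; apply/existsP; eexists; apply/andP; split; first exact: (tile_in u).
apply/orP; left; apply/orP; left; rewrite /= frame_pix -e1 -e2 frame_pix !eqxx /=.
by [].
Qed.

Lemma A_down (u v : 'I_m * 'I_n) : (v.1 : nat) = (u.1).+1 -> v.2 = u.2 ->
  pcol u != pcol v -> A_theta p (pcol u) (pcol v).
Proof.
move=> e1 e2 ne; apply/existsP; eexists; apply/andP; split; first exact: (tile_in u).
apply/orP; right; apply/orP; left; rewrite /= frame_pix -e1 -e2 frame_pix !eqxx /=.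
by [].
Qed.

Lemma A'_left (u v : 'I_m * 'I_n) : v.1 = u.1 -> (u.2 : nat) = (v.2).+1 ->
  pcol u != pcol v -> A'_theta p (pcol u) (pcol v).
Proof.
move=> e1 e2 ne; apply/existsP; eexists; apply/andP; split; first exact: (tile_in v).
apply/orP; left; apply/orP; left; rewrite /= frame_pix e1 -e2 frame_pix !eqxx /=.
by rewrite eq_sym.
Qed.

Lemma A'_down (u v : 'I_m * 'I_n) : (v.1 : nat) = (u.1).+1 -> v.2 = u.2 ->
  pcol u != pcol v -> A'_theta p (pcol u) (pcol v).
Proof.
move=> e1 e2 ne; apply/existsP; eexists; apply/andP; split; first exact: (tile_in u).
apply/orP; right; apply/orP; left; rewrite /= frame_pix -e1 -e2 frame_pix !eqxx /=.
by [].
Qed.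

Lemma fr2 i j i2 j2 x y : frame p i j = Some x -> frame p i2 j2 = Some y ->
  exists u v, pcol u = x /\ pcol v = y /\ (u.1 : nat).+1 = i /\ (u.2 : nat).+1 = j /\
     (v.1 : nat).+1 = i2 /\ (v.2 : nat).+1 = j2.
Proof.
move=> /frame_some [u [? ? ?]] /frame_some [v [? ? ?]].
by exists u, v; repeat split.
Qed.

Lemma A_decode x y : A_theta p x y -> x != y /\
  exists u v, [/\ pcol u = x, pcol v = y, u.1 <= v.1 & u.2 <= v.2].
Proof.
case/existsP => t /andP [/existsP [i /existsP [j /eqP ->]]].
rewrite /A_tile /H_tile /V_tile /=.
case/orP => [/orP [] | /orP []] /and3P [/eqP e1 /eqP e2 ne];
  (split; [by apply: contraNneq ne; rewrite -e1 -e2 => -> |]);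
  have [u [v [hu [hv [h1 [h2 [h3 h4]]]]]]] := fr2 (esym e1) (esym e2);
  exists u, v; split => //; apply/leP; lia.
Qed.

Lemma A'_decode x y : A'_theta p x y -> x != y /\
  exists u v, [/\ pcol u = x, pcol v = y, u.1 <= v.1 & v.2 <= u.2].
Proof.
case/existsP => t /andP [/existsP [i /existsP [j /eqP ->]]].
rewrite /A'_tile /H_tile /V_tile /=.
case/orP => [/orP [] | /orP []] /and3P [/eqP e1 /eqP e2 ne].
- split; first by apply: contraNneq ne; rewrite -e1 -e2 => ->.
  have [v [u [hv [hu [h1 [h2 [h3 h4]]]]]]] := fr2 (esym e1) (esym e2).
  exists u, v; split => //; apply/leP; lia.
- split; first by apply: contraNneq ne; rewrite -e1 -e2 => ->.
  have [v [u [hv [hu [h1 [h2 [h3 h4]]]]]]] := fr2 (esym e1) (esym e2).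
  exists u, v; split => //; apply/leP; lia.
- split; first by apply: contraNneq ne; rewrite -e1 -e2 => ->.
  have [u [v [hu [hv [h1 [h2 [h3 h4]]]]]]] := fr2 (esym e1) (esym e2).
  exists u, v; split => //; apply/leP; lia.
- split; first by apply: contraNneq ne; rewrite -e1 -e2 => ->.
  have [u [v [hu [hv [h1 [h2 [h3 h4]]]]]]] := fr2 (esym e1) (esym e2).
  exists u, v; split => //; apply/leP; lia.
Qed.
End Pix.

Section Back.
Variables (Sigma : finType) (m n : nat) (p : 'M[Sigma]_(m, n)).
Local Notation pc := (pcol p).

Lemma conn_A (u v : 'I_m * 'I_n) : u.1 <= v.1 -> u.2 <= v.2 ->
  connect (A_theta p) (pc u) (pc v).
Proof.
move: {2}((v.1 - u.1) + (v.2 - u.2)) (erefl ((v.1 - u.1) + (v.2 - u.2))) => d.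
elim: d u => [|d IH] u hd h1 h2.
  have e : u = v.
    move: hd => /eqP; rewrite addn_eq0 !subn_eq0 => /andP [h3 h4].
    case: u v h1 h2 h3 h4 => [a b] [c e] /= h1 h2 h3 h4.
    by congr pair; apply: val_inj; apply/eqP; rewrite eqn_leq ?h1 ?h2 ?h3 ?h4.
  by rewrite e connect0.
case: (ltnP u.2 v.2) => hlt.
  have [j' ej'] : {j' : 'I_n | (j' : nat) = (u.2).+1}
    by exists (Ordinal (leq_ltn_trans hlt (ltn_ord v.2))).
  have IH' : connect (A_theta p) (pc (u.1, j')) (pc v).
    apply: IH => //=; rewrite ej' //; nlia.
  case: (eqVneq (pc u) (pc (u.1, j'))) => [->//|ne].
  exact: connect_trans (connect1 (@A_right _ _ _ p u (u.1, j') erefl ej' ne)) IH'.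
have e2 : u.2 = v.2 by apply: val_inj; apply/eqP; rewrite eqn_leq h2 hlt.
have hlt1 : u.1 < v.1.
  rewrite ltn_neqAle h1 andbT; apply/negP => /eqP e1.
  by move: hd; rewrite e1 e2 !subnn.
have [i' ei'] : {i' : 'I_m | (i' : nat) = (u.1).+1}
  by exists (Ordinal (leq_ltn_trans hlt1 (ltn_ord v.1))).
have IH' : connect (A_theta p) (pc (i', u.2)) (pc v).
  apply: IH => //=; rewrite ?ei' ?e2 //; move: hd; rewrite e2; nlia.
case: (eqVneq (pc u) (pc (i', u.2))) => [->//|ne].
exact: connect_trans (connect1 (@A_down _ _ _ p u (i', u.2) ei' erefl ne)) IH'.
Qed.


Lemma conn_A' (u v : 'I_m * 'I_n) : u.1 <= v.1 -> v.2 <= u.2 ->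
  connect (A'_theta p) (pc u) (pc v).
Proof.
move: {2}((v.1 - u.1) + (u.2 - v.2)) (erefl ((v.1 - u.1) + (u.2 - v.2))) => d.
elim: d u => [|d IH] u hd h1 h2.
  have e : u = v.
    move: hd => /eqP; rewrite addn_eq0 !subn_eq0 => /andP [h3 h4].
    case: u v h1 h2 h3 h4 => [a b] [c e] /= h1 h2 h3 h4.
    by congr pair; apply: val_inj; apply/eqP; rewrite eqn_leq ?h1 ?h2 ?h3 ?h4.
  by rewrite e connect0.
case: (ltnP v.2 u.2) => hlt.
  have [j' ej'] : {j' : 'I_n | (u.2 : nat) = j'.+1}.
    have hj : (u.2 : nat).-1 < n by apply: leq_ltn_trans (leq_pred _) (ltn_ord _).
    exists (Ordinal hj) => /=; rewrite prednK //; exact: leq_ltn_trans (leq0n _) hlt.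
  have IH' : connect (A'_theta p) (pc (u.1, j')) (pc v).
    apply: IH => //=; nlia.
  case: (eqVneq (pc u) (pc (u.1, j'))) => [->//|ne].
  exact: connect_trans (connect1 (@A'_left _ _ _ p u (u.1, j') erefl ej' ne)) IH'.
have e2 : u.2 = v.2 by apply: val_inj; apply/eqP; rewrite eqn_leq h2 hlt.
have hlt1 : u.1 < v.1.
  rewrite ltn_neqAle h1 andbT; apply/negP => /eqP e1.
  by move: hd; rewrite e1 e2 !subnn.
have [i' ei'] : {i' : 'I_m | (i' : nat) = (u.1).+1}
  by exists (Ordinal (leq_ltn_trans hlt1 (ltn_ord v.1))).
have IH' : connect (A'_theta p) (pc (i', u.2)) (pc v).
  apply: IH => //=; rewrite ?ei' ?e2 //; move: hd; rewrite e2; nlia.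
case: (eqVneq (pc u) (pc (i', u.2))) => [->//|ne].
exact: connect_trans (connect1 (@A'_down _ _ _ p u (i', u.2) ei' erefl ne)) IH'.
Qed.

Lemma cycle_of_conn (r : rel Sigma) a b : a != b -> connect r a b -> connect r b a ->
  exists s, s != [::] /\ cycle r s.
Proof.
move=> ab /connectP [p1 pa eb] /connectP [p2 pb ea].
have pt : path r a (p1 ++ p2) by rewrite cat_path pa -eb pb.
have lt : last a (p1 ++ p2) = a by rewrite last_cat -eb -ea.
case: p1 pa eb pt lt => [|x1 p1'] pa eb; first by move: ab; rewrite eb eqxx.
rewrite cat_cons lastI last_rcons => pt ez.
exists (a :: belast x1 (p1' ++ p2)); split => //.
by rewrite ez in pt.
Qed.

Lemma convex (hA : acyclic (A_theta p)) (hA' : acyclic (A'_theta p))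
  (u v w : 'I_m * 'I_n) : pc u = pc v -> u.1 <= w.1 <= v.1 ->
  (u.2 <= w.2 <= v.2) || (v.2 <= w.2 <= u.2) -> pc w = pc u.
Proof.
move=> euv /andP [r1 r2] /orP [/andP [c1 c2] | /andP [c1 c2]];
  apply/eqP; apply/negPn/negP => ne.
- have h1 := conn_A r2 c2; rewrite -euv in h1.
  have [s [sn cs]] := cycle_of_conn ne h1 (conn_A r1 c1).
  by move: (hA s sn); rewrite cs.
- have h1 := conn_A' r2 c1; rewrite -euv in h1.
  have [s [sn cs]] := cycle_of_conn ne h1 (conn_A' r1 c2).
  by move: (hA' s sn); rewrite cs.
Qed.

Lemma convex2 (hA : acyclic (A_theta p)) (hA' : acyclic (A'_theta p))
  (u v w : 'I_m * 'I_n) : pc u = pc v ->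
  (u.1 <= w.1 <= v.1) || (v.1 <= w.1 <= u.1) ->
  (u.2 <= w.2 <= v.2) || (v.2 <= w.2 <= u.2) -> pc w = pc u.
Proof.
move=> euv /orP [r|r] c.
  exact: (convex hA hA' euv r c).
have c' : (v.2 <= w.2 <= u.2) || (u.2 <= w.2 <= v.2) by rewrite orbC.
rewrite euv; exact: (convex hA hA' (esym euv) r c').
Qed.

Definition blk (k0 : 'I_m * 'I_n) := [set y in [set: 'I_m * 'I_n] | pc k0 == pc y].

Lemma blk_sub (hA : acyclic (A_theta p)) (hA' : acyclic (A'_theta p)) k0 :
  subdomain (blk k0).
Proof.
have P0 : pc k0 == pc k0 by [].
case: (@arg_minnP _ k0 (fun k => pc k0 == pc k) (fun k : 'I_m * 'I_n => (k.1 : nat)) P0) => kr0 Pr0 hr0.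
case: (@arg_maxnP _ k0 (fun k => pc k0 == pc k) (fun k : 'I_m * 'I_n => (k.1 : nat)) P0) => kr1 Pr1 hr1.
case: (@arg_minnP _ k0 (fun k => pc k0 == pc k) (fun k : 'I_m * 'I_n => (k.2 : nat)) P0) => kc0 Pc0 hc0.
case: (@arg_maxnP _ k0 (fun k => pc k0 == pc k) (fun k : 'I_m * 'I_n => (k.2 : nat)) P0) => kc1 Pc1 hc1.
exists kr0.1, kr1.1, kc0.2, kc1.2; split; first exact: hr0 _ Pr1.
split; first exact: hc0 _ Pc1.
apply/setP => w; rewrite !inE /=.
apply/idP/idP.
  move=> Pw; have := hr1 _ Pw; have := hc1 _ Pw; rewrite /geq /= => -> ->.
  by rewrite (hr0 _ Pw) (hc0 _ Pw).
case/andP => /andP [a1 a2] /andP [b1 b2].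
move/eqP: Pr0 => Pr0; move/eqP: Pr1 => Pr1; move/eqP: Pc0 => Pc0; move/eqP: Pc1 => Pc1.
have ew' : pc (kc0.1, w.2) = pc kc0.
  apply: (convex2 hA hA' (u := kc0) (v := kc1) (w := (kc0.1, w.2)) (etrans (esym Pc0) Pc1)) => /=.
    by case: (leqP kc0.1 kc1.1) => h; rewrite leqnn ?h ?(ltnW h) ?orbT.
  by rewrite b1 b2.
apply/eqP; case: (leqP w.1 kc0.1) => h.
  have e : pc w = pc kr0.
    apply: (convex2 hA hA' (u := kr0) (v := (kc0.1, w.2)) (w := w)).
    - by rewrite ew' -Pc0 -Pr0.
    - by rewrite /= a1 h.
    - by case: (leqP kr0.2 w.2) => h'; rewrite /= leqnn ?h' ?(ltnW h') ?orbT.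
  by rewrite e -Pr0.
have e : pc w = pc (kc0.1, w.2).
  apply: (convex2 hA hA' (u := (kc0.1, w.2)) (v := kr1) (w := w)).
  - by rewrite ew' -Pc0.
  - by rewrite /= (ltnW h) a2.
  - by case: (leqP kr1.2 w.2) => h'; rewrite /= leqnn ?h' ?(ltnW h') ?orbT.
by rewrite e ew' -Pc0.
Qed.

Lemma back (hA : acyclic (A_theta p)) (hA' : acyclic (A'_theta p)) : regional p.
Proof.
exists (preim_partition pc [set: 'I_m * 'I_n]).
have blkP : forall D, D \in preim_partition pc [set: 'I_m * 'I_n] ->
    exists k0, D = blk k0.
  by move=> D /imsetP [k0 _ ->]; exists k0.
split.
  split; first exact: preim_partitionP.
  move=> D /blkP [k0 ->]; split; first exact: blk_sub.
  by exists (pc k0) => ij; rewrite !inE /= => /eqP e; rewrite e.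
move=> D1 D2 C1 C2 /blkP [k1 e1'] /blkP [k2 e2'] h1 h2 ne; subst D1 D2.
have e1 : C1 = pc k1.
  rewrite -(h1 k1); [reflexivity|]. by rewrite !inE eqxx.
have e2 : C2 = pc k2.
  rewrite -(h2 k2); [reflexivity|]. by rewrite !inE eqxx.
apply: contraNneq ne => e; rewrite e1 e2 in e.
by apply/eqP/setP => y; rewrite !inE e.
Qed.

End Back.

Section Fwd.
Variables (Sigma : finType) (m n : nat) (p : 'M[Sigma]_(m, n)).
Local Notation pc := (pcol p).
Variable (P : {set {set 'I_m * 'I_n}}).
Hypothesis hP : regional_partition p P.

Definition bx (b : ('I_m * 'I_m) * ('I_n * 'I_n)) : {set 'I_m * 'I_n} :=
  [set ij : 'I_m * 'I_n | (b.1.1 <= ij.1 <= b.1.2) && (b.2.1 <= ij.2 <= b.2.2)].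
Definition okb (c : Sigma) b :=
  [&& [set k | pc k == c] == bx b, b.1.1 <= b.1.2 & b.2.1 <= b.2.2].
Definition pres (c : Sigma) := [exists k, pc k == c].

Lemma cover_in k : exists2 D, D \in P & k \in D.
Proof.
case: hP => [[/and3P [/eqP cv _ _] _] _].
have kc : k \in cover P by rewrite cv inE.
by exists (pblock P k); [exact: pblock_mem | rewrite mem_pblock].
Qed.

Lemma pres_box c : pres c -> exists b, okb c b.
Proof.
case/existsP => k0 /eqP e0.
have [D DP kD] := cover_in k0.
case: hP => [[_ hD] hreg].
have [[x [x' [y [y' [hx [hy eD]]]]]] [C hC]] := hD D DP.
have eC : C = c by rewrite -e0 -(hC k0 kD).
exists ((x, x'), (y, y')); rewrite /okb /= hx hy andbT andbT.
apply/eqP/setP => ij; rewrite inE.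
have -> : (ij \in bx (x, x', (y, y'))) = (ij \in D) by rewrite eD !inE.
apply/idP/idP => [/eqP eij | ijD]; last by rewrite -eC -(hC _ ijD).
have [D' D'P ijD'] := cover_in ij.
have [_ [C' hC']] := hD D' D'P.
case: (eqVneq D D') => [-> //|ne].
have := hreg D D' C C' DP D'P hC hC' ne.
by rewrite eC -eij -(hC' _ ijD') /pcol eqxx.
Qed.

Definition bnd c := [pick b | okb c b].
Definition lo1 c := if bnd c is Some b then (b.1.1 : nat) else 0.
Definition hi1 c := if bnd c is Some b then (b.1.2 : nat) else 0.
Definition lo2 c := if bnd c is Some b then (b.2.1 : nat) else 0.
Definition hi2 c := if bnd c is Some b then (b.2.2 : nat) else 0.

Lemma bndP c : pres c ->
  [/\ forall k, (pc k == c) = (lo1 c <= k.1 <= hi1 c) && (lo2 c <= k.2 <= hi2 c),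
      lo1 c <= hi1 c, lo2 c <= hi2 c, hi1 c < m & hi2 c < n].
Proof.
move=> pc'; rewrite /lo1 /hi1 /lo2 /hi2 /bnd.
case: pickP => [b /and3P [/eqP e h1 h2] | none]; last first.
  by have [b hb] := pres_box pc'; move: (none b); rewrite hb.
split; [|exact: h1|exact: h2|exact: ltn_ord|exact: ltn_ord].
by move=> k; move/setP: e => /(_ k); rewrite !inE /=.
Qed.

Lemma disj0 x y : pres x -> pres y -> x != y ->
  [|| hi1 x < lo1 y, hi1 y < lo1 x, hi2 x < lo2 y | hi2 y < lo2 x].
Proof.
move=> px py xy.
have [ex lx1 lx2 mx nx] := bndP px; have [ey ly1 ly2 my ny] := bndP py.
apply/negPn/negP; rewrite !negb_or -!leqNgt => /and4P [a1 a2 a3 a4].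
have hr : maxn (lo1 x) (lo1 y) < m by rewrite gtn_max; apply/andP; split; nlia.
have hs : maxn (lo2 x) (lo2 y) < n by rewrite gtn_max; apply/andP; split; nlia.
pose k : 'I_m * 'I_n := (Ordinal hr, Ordinal hs).
have kx : pc k == x.
  rewrite ex /= /maxn; case: (ltnP (lo1 x) (lo1 y)) => ?; case: (ltnP (lo2 x) (lo2 y)) => ?;
  repeat (apply/andP; split); nlia.
have ky : pc k == y.
  rewrite ey /= /maxn; case: (ltnP (lo1 x) (lo1 y)) => ?; case: (ltnP (lo2 x) (lo2 y)) => ?;
  repeat (apply/andP; split); nlia.
by move: xy; rewrite -(eqP kx) -(eqP ky) eqxx.
Qed.

Lemma fwdA : acyclic (A_theta p).
Proof.
apply: (@nocycle _ pres lo1 hi1 lo2 hi2).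
- by move=> x /bndP [].
- exact: disj0.
move=> x y /A_decode [xy [u [v [eu ev h1 h2]]]].
have px : pres x by apply/existsP; exists u; rewrite eu.
have py : pres y by apply/existsP; exists v; rewrite ev.
have [ex _ _ _ _] := bndP px; have [ey _ _ _ _] := bndP py.
move: (ex u) (ey v); rewrite eu ev !eqxx => /esym/andP [/andP [u1 u2] /andP [u3 u4]]
  /esym/andP [/andP [v1 v2] /andP [v3 v4]].
apply/and5P; split => //; nlia.
Qed.

Lemma fwdA' : acyclic (A'_theta p).
Proof.
apply: (@nocycle _ pres lo1 hi1 (fun c => n - hi2 c) (fun c => n - lo2 c)).
- by move=> x /bndP [_ ? ? _ _]; split => //; apply: leq_sub2l.
- move=> x y px py xy.
  have [_ lx1 lx2 mx nx] := bndP px; have [_ ly1 ly2 my ny] := bndP py.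
  case/orP: (disj0 px py xy) => [->//|/orP [->|/orP [h|h]]]; rewrite ?orbT //.
    by rewrite (_ : n - lo2 y < n - hi2 x) ?orbT //; nlia.
  by rewrite (_ : n - lo2 x < n - hi2 y) ?orbT //; nlia.
move=> x y /A'_decode [xy [u [v [eu ev h1 h2]]]].
have px : pres x by apply/existsP; exists u; rewrite eu.
have py : pres y by apply/existsP; exists v; rewrite ev.
have [ex _ _ _ nx] := bndP px; have [ey _ _ _ ny] := bndP py.
move: (ex u) (ey v); rewrite eu ev !eqxx => /esym/andP [/andP [u1 u2] /andP [u3 u4]]
  /esym/andP [/andP [v1 v2] /andP [v3 v4]].
apply/and5P; split => //; nlia.
Qed.
End Fwd.

Unset Implicit Arguments.

Theorem proposition3 (Sigma : finType) (m n : nat) (p : 'M[Sigma]_(m, n)) :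
  0 < m -> 0 < n ->
  (regional p <-> acyclic (A_theta p) /\ acyclic (A'_theta p)).
Proof.
move=> _ _; split.
  by case=> P hP; split; [exact: (fwdA hP) | exact: (fwdA' hP)].
by case=> hA hA'; exact: (back hA hA').
Qed.
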